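(* For every positive integer $t$, let $s_{\max}(t)$ be the maximum size of a Sidon set in $\mathbb{F}_2^t$ and $s^{\mathrm{sf}}_{\max}(t)$ the maximum size of a sum-free Sidon set in $\mathbb{F}_2^t$. Then $s_{\max}(t) = s^{\mathrm{sf}}_{\max}(t)+1$.
   Context: $\mathbb{F}_2^t$ is the $t$-dimensional vector space over $\mathbb{F}_2$. A subset $M\subseteq\mathbb{F}_2^t$ is Sidon if $m_1+m_2\neq m_3+m_4$ for all pairwise distinct $m_1,m_2,m_3,m_4\in M$; it is sum-free if $m_1+m_2\neq m_3$ for all $m_1,m_2,m_3\in M$ (not necessarily distinct). *)

(* Defs.v *)
From mathcomp Require Import all_boot all_order all_algebra.
Set Implicit Arguments. Unset Strict Implicit. Unset Printing Implicit Defensive.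
Import GRing.Theory.
Local Open Scope ring_scope.

Definition F2vec (t : nat) := 'rV['F_2]_t.

Definition sidon (t : nat) (M : {set F2vec t}) : bool :=
  [forall m1 in M, forall m2 in M, forall m3 in M, forall m4 in M,
     [&& m1 != m2, m1 != m3, m1 != m4, m2 != m3, m2 != m4 & m3 != m4]
       ==> (m1 + m2 != m3 + m4)].

Definition sum_free (t : nat) (M : {set F2vec t}) : bool :=
  [forall m1 in M, forall m2 in M, forall m3 in M, m1 + m2 != m3].

Definition s_max (t : nat) : nat :=
  (\max_(M : {set F2vec t} | sidon M) #|M|)%N.

Definition s_sf_max (t : nat) : nat :=
  (\max_(M : {set F2vec t} | sidon M && sum_free M) #|M|)%N.

(* Main.v *)
Require Import Defs.
From mathcomp Require Import all_boot all_order all_algebra.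
Import GRing.Theory.
Set Implicit Arguments. Unset Strict Implicit.

Section Aux.
Variable t : nat.
Local Notation V := (F2vec t).
Local Open Scope ring_scope.

Lemma addvv (x : V) : x + x = 0.
Proof.
apply/matrixP => i j; rewrite !mxE.
by apply/val_inj; case: (x i j) => [[|[|]]].
Qed.

Lemma addvK (x y : V) : x + y + y = x.
Proof. by rewrite -addrA addvv addr0. Qed.

Lemma sidonE (M : {set V}) m1 m2 m3 m4 : sidon M ->
  m1 \in M -> m2 \in M -> m3 \in M -> m4 \in M ->
  [&& m1 != m2, m1 != m3, m1 != m4, m2 != m3, m2 != m4 & m3 != m4] ->
  m1 + m2 != m3 + m4.
Proof.
move=> /forallP /(_ m1) /implyP H h1; move: {H}(H h1).
move=> /forallP /(_ m2) /implyP H h2; move: {H}(H h2).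
move=> /forallP /(_ m3) /implyP H h3; move: {H}(H h3).
move=> /forallP /(_ m4) /implyP H h4; move: {H}(H h4).
by move/implyP.
Qed.

Lemma sidonI (M : {set V}) :
  (forall m1 m2 m3 m4, m1 \in M -> m2 \in M -> m3 \in M -> m4 \in M ->
  [&& m1 != m2, m1 != m3, m1 != m4, m2 != m3, m2 != m4 & m3 != m4] ->
  m1 + m2 != m3 + m4) -> sidon M.
Proof.
move=> H; apply/forallP => m1; apply/implyP => h1.
apply/forallP => m2; apply/implyP => h2.
apply/forallP => m3; apply/implyP => h3.
apply/forallP => m4; apply/implyP => h4.
apply/implyP; exact: H.
Qed.

Lemma sum_freeE (M : {set V}) m1 m2 m3 : sum_free M ->
  m1 \in M -> m2 \in M -> m3 \in M -> m1 + m2 != m3.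
Proof.
move=> /forallP /(_ m1) /implyP H h1; move: {H}(H h1).
move=> /forallP /(_ m2) /implyP H h2; move: {H}(H h2).
by move=> /forallP /(_ m3) /implyP H h3; move: {H}(H h3).
Qed.

Lemma sum_freeI (M : {set V}) :
  (forall m1 m2 m3, m1 \in M -> m2 \in M -> m3 \in M -> m1 + m2 != m3) ->
  sum_free M.
Proof.
move=> H; apply/forallP => m1; apply/implyP => h1.
apply/forallP => m2; apply/implyP => h2.
apply/forallP => m3; apply/implyP => h3; exact: H.
Qed.

Lemma add0_sidon (S : {set V}) : sidon S -> sum_free S ->
  (0 \notin S) /\ sidon (0 |: S).
Proof.
move=> sS fS.
have n0 : 0 \notin S.
  apply/negP => h0; move: (sum_freeE fS h0 h0 h0); by rewrite addr0 eqxx.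
split => //.
have key : forall x y z, x \in S -> y \in S -> z \in S -> x + y != z.
  by move=> x y z hx hy hz; exact: sum_freeE fS hx hy hz.
apply: sidonI => m1 m2 m3 m4; rewrite !in_setU1.
case/orP=> [/eqP->|h1]; case/orP=> [/eqP->|h2]; case/orP=> [/eqP->|h3];
  case/orP=> [/eqP->|h4]; rewrite ?eqxx ?andbF ?andFb //= => D;
  rewrite ?add0r ?addr0.
- by rewrite eq_sym; apply: key.
- by rewrite eq_sym; apply: key.
- by apply: key.
- by apply: key.
- exact: sidonE sS h1 h2 h3 h4 D.
Qed.

Lemma shift_sidon (M : {set V}) a : sidon M -> a \in M ->
  let S := [set x | (x + a \in M) && (x != 0)] in
  [/\ sidon S, sum_free S & #|S| = (#|M| - 1)%N].
Proof.
move=> sM aM S.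
have inS x : (x \in S) = (x + a \in M) && (x != 0) by rewrite inE.
have shift x y : (x + a) + (y + a) = x + y.
  by rewrite addrACA addvv addr0.
have sS : sidon S.
  apply: sidonI => m1 m2 m3 m4; rewrite !inS.
  case/andP=> h1 _; case/andP=> h2 _; case/andP=> h3 _; case/andP=> h4 _ D.
  rewrite -shift -(shift m3); apply: sidonE sM h1 h2 h3 h4 _.
  by rewrite !(inj_eq (addIr a)).
split => //.
- apply: sum_freeI => x y z; rewrite !inS.
  case/andP=> hx nx; case/andP=> hy ny; case/andP=> hz nz.
  apply/eqP => E.
  have [exy|nxy] := eqVneq x y.
    by move: E; rewrite exy addvv => E; rewrite -E eqxx in nz.
  have [exz|nxz] := eqVneq x z.
    by move: E; rewrite exz => /(congr1 (fun w => z + w)); rewrite addrA addvv add0r => E; rewrite E eqxx in ny.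
  have [eyz|nyz] := eqVneq y z.
    by move: E; rewrite eyz => /(congr1 (fun w => w + z)); rewrite addvK addvv => E; rewrite E eqxx in nx.
  have h0 : 0 + a \in M by rewrite add0r.
  move: (sidonE sM hx hy hz h0); rewrite shift shift E addr0 eqxx.
  move=> H; have := H _; rewrite !(inj_eq (addIr a)).
  by rewrite nxy nxz nx nyz ny nz => /(_ isT).
- have -> : S = [set x | x + a \in M] :\ 0.
    by apply/setP => x; rewrite !inE andbC.
  have cP : #|[set x | x + a \in M]| = #|M|.
    have -> : [set x | x + a \in M] = (fun x => x + a) @^-1: M.
      by apply/setP => x; rewrite !inE.
    by rewrite card_preimset //; apply: addIr.
  rewrite -cP (cardsD1 0 [set x | x + a \in M]) !inE add0r aM.
  by rewrite add1n subn1.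
Qed.

End Aux.

Theorem proposition2p5 (t : nat) : (0 < t)%N -> s_max t = (s_sf_max t + 1)%N.
Proof.
move=> _; apply/eqP; rewrite eqn_leq; apply/andP; split.
- apply/bigmax_leqP => M sM.
  have [M0|[a aM]] := set_0Vmem M.
    by rewrite M0 cards0.
  have [sS fS cS] := shift_sidon sM aM.
  suff : (#|M| - 1 <= s_sf_max t)%N by rewrite leq_subLR addnC.
  rewrite -cS; apply: leq_bigmax_cond; by rewrite sS fS.
- have : (0 < #|[pred S : {set F2vec t} | sidon S && sum_free S]|)%N.
    apply/card_gt0P; exists set0; rewrite inE; apply/andP; split.
      by apply: sidonI => m1; rewrite inE.
    by apply: sum_freeI => m1; rewrite inE.
  move=> /(eq_bigmax_cond (fun S : {set F2vec t} => #|S|)) [S].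
  rewrite inE => /andP [sS fS] E.
  have E' : s_sf_max t = #|S| := E.
  rewrite E'.
  have [n0 s0] := add0_sidon sS fS.
  have C : #|(0%R : F2vec t) |: S| = #|S|.+1 by rewrite cardsU1 n0.
  rewrite addn1 -C.
  by apply: leq_bigmax_cond.
Qed.
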